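(* Let $k\ge 6$ and let $H$ be the complement of $P_k$ or of $C_k$. Then $\eta(H)=\lfloor (k+\omega(H))/2\rfloor$, where $\omega(H)$ is the size of a maximum clique of $H$. Explicitly, writing $k=4t+r$ with $r\in\{0,1,2,3\}$: $\eta(\bar C_k)=3t,3t,3t+1,3t+2$ and $\eta(\bar P_k)=3t,3t+1,3t+1,3t+2$ for $r=0,1,2,3$ respectively.
   Context: $\bar F$ is the complement of $F$; $P_k$, $C_k$ are the path and cycle on $k$ vertices. A $K_t$-minor function of $H$ is a map $f:V(H)\to\{1,\dots,t\}$ (defined on all vertices) such that each preimage $f^{-1}(i)$ induces a connected subgraph of $H$ and for all $i\ne j$ there is at least one edge between $f^{-1}(i)$ and $f^{-1}(j)$; $\eta(H)$ is the largest $t$ for which such a function exists. *)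

(* Defs.v *)
From mathcomp Require Import all_boot.
Set Implicit Arguments. Unset Strict Implicit. Unset Printing Implicit Defensive.

Definition path_rel (k : nat) : rel 'I_k :=
  fun i j => (i.+1 == j :> nat) || (j.+1 == i :> nat).

Definition cycle_rel (k : nat) : rel 'I_k :=
  fun i j => path_rel i j ||
             ((i == 0 :> nat) && (j == k.-1 :> nat)) ||
             ((j == 0 :> nat) && (i == k.-1 :> nat)).

Arguments path_rel k : clear implicits.
Arguments cycle_rel k : clear implicits.

Definition compl_rel (V : finType) (e : rel V) : rel V :=
  fun x y => (x != y) && ~~ e x y.

Definition induced_connected (V : finType) (e : rel V) (S : {set V}) : bool :=
  (S != set0) &&
  [forall x in S, forall y in S,
     connect (fun u v => [&& e u v, u \in S & v \in S]) x y].

(* K_t-minor function f : V -> {1..t} (here encoded as 'I_t = {0..t-1}). *)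
Definition minor_fun (V : finType) (e : rel V) (t : nat) (f : V -> 'I_t) : bool :=
  [forall i : 'I_t, induced_connected e [set x | f x == i]] &&
  [forall i : 'I_t, forall j : 'I_t,
     (i != j) ==> [exists x, exists y, [&& f x == i, f y == j & e x y]]].

Definition has_Kt_minor_fun (V : finType) (e : rel V) (t : nat) : bool :=
  [exists f : {ffun V -> 'I_t}, minor_fun e f].

(* eta(H): the largest t admitting a K_t-minor function (t <= |V| necessarily
   when t >= 1, since preimages are nonempty). *)
Definition eta (V : finType) (e : rel V) : nat :=
  \max_(t < #|V|.+1 | has_Kt_minor_fun e t) t.

Definition is_clique (V : finType) (e : rel V) (S : {set V}) : bool :=
  [forall x in S, forall y in S, (x != y) ==> e x y].

Definition omega (V : finType) (e : rel V) : nat :=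
  \max_(S : {set V} | is_clique e S) #|S|.

(* Main.v *)
Require Import Defs.
From mathcomp Require Import all_boot.
From mathcomp Require Import zify.

Lemma construct (k T : nat) (Cn : nat -> nat -> bool) (a b : nat -> nat) :
  0 < T ->
  (forall i, i < T -> a i < k /\ b i < k) ->
  (forall i j, i < T -> j < T -> i <> j ->
     [/\ a i <> a j, a i <> b j, b i <> a j & b i <> b j]) ->
  (forall x, x < k -> exists2 i, i < T & (a i = x \/ b i = x)) ->
  (forall i, i < T -> a i <> b i -> ~~ Cn (a i) (b i) && ~~ Cn (b i) (a i)) ->
  (forall i j, i < T -> j < T -> i <> j ->
     [|| ~~Cn (a i) (a j), ~~Cn (a i) (b j), ~~Cn (b i) (a j) | ~~Cn (b i) (b j)]) ->
  has_Kt_minor_fun (compl_rel (fun x y : 'I_k => Cn x y)) T.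
Proof.
case: T => // T _ H1 H2 H3 H4 H5.
pose P (x : 'I_k) (i : 'I_T.+1) := (a i == x) || (b i == x).
pose f := [ffun x => odflt ord0 [pick i | P x i]].
have fP : forall x, P x (f x).
  move=> x; rewrite ffunE; case: pickP => //= H; exfalso.
  have [i Hi Hx] := H3 x (ltn_ord x).
  have := H (Ordinal Hi); rewrite /P /=.
  by case: Hx => ->; rewrite eqxx ?orbT.
have fE : forall x i, P x i -> f x = i.
  move=> x i Pi; apply/val_inj/eqP; apply/negPn/negP => /eqP ne.
  have := fP x; have := H2 _ _ (ltn_ord (f x)) (ltn_ord i) ne.
  move: Pi; rewrite /P => ? [? ? ? ?]; lia.
have key : forall (u v : nat) (i j : 'I_T.+1), (a i = u \/ b i = u) ->
    (a j = v \/ b j = v) -> u <> v -> ~~ Cn u v ->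
    exists x y, [&& f x == i, f y == j & compl_rel (fun x y : 'I_k => Cn x y) x y].
  move=> u v i j Hu Hv uv Cuv.
  have uk : u < k by have := H1 i (ltn_ord i); case: Hu => <-; case.
  have vk : v < k by have := H1 j (ltn_ord j); case: Hv => <-; case.
  exists (Ordinal uk), (Ordinal vk).
  have -> : f (Ordinal uk) = i by apply: fE; rewrite /P /=; case: Hu => ->; rewrite eqxx ?orbT.
  have -> : f (Ordinal vk) = j by apply: fE; rewrite /P /=; case: Hv => ->; rewrite eqxx ?orbT.
  rewrite !eqxx /compl_rel /= Cuv andbT.
  by apply/eqP => -[].
apply/existsP; exists f; apply/andP; split.
  apply/forallP => i; apply/andP; split.
    have [ak _] := H1 i (ltn_ord i).
    apply/set0Pn; exists (Ordinal ak); rewrite inE (fE _ i) // /P /= eqxx //.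
  apply/forallP => x; apply/implyP; rewrite inE => /eqP fx.
  apply/forallP => y; apply/implyP; rewrite inE => /eqP fy.
  have Px := fP x; have Py := fP y; rewrite fx in Px; rewrite fy in Py.
  case: (eqVneq x y) => [->|xy]; first exact: connect0.
  apply: connect1; rewrite !inE fx fy !eqxx !andbT /compl_rel xy /=.
  have nab : a i <> b i.
    move=> ab; have E : (x : nat) = y by move: Px Py; rewrite /P ab; lia.
    by move: xy; rewrite (val_inj E) eqxx.
  have /andP[n1 n2] := H4 i (ltn_ord i) nab.
  have xyn : (x : nat) <> y by move=> E; move: xy; rewrite (val_inj E) eqxx.
  move: Px Py; rewrite /P => /orP[] /eqP ax /orP[] /eqP ay;
    rewrite -?ax -?ay //; exfalso; apply: xyn; lia.
apply/forallP => i; apply/forallP => j; apply/implyP => ij.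
have ne : (i : nat) <> j by move=> E; move: ij; rewrite (val_inj E) eqxx.
have [h1 h2 h3 h4] := H2 _ _ (ltn_ord i) (ltn_ord j) ne.
have := H5 _ _ (ltn_ord i) (ltn_ord j) ne.
case/or4P => C; apply/existsP.
- by have [x [y H]] := key _ _ i j (or_introl erefl) (or_introl erefl) h1 C; exists x; apply/existsP; exists y.
- by have [x [y H]] := key _ _ i j (or_introl erefl) (or_intror erefl) h2 C; exists x; apply/existsP; exists y.
- by have [x [y H]] := key _ _ i j (or_intror erefl) (or_introl erefl) h3 C; exists x; apply/existsP; exists y.
- by have [x [y H]] := key _ _ i j (or_intror erefl) (or_intror erefl) h4 C; exists x; apply/existsP; exists y.
Qed.

Lemma minor_bound (V : finType) (e : rel V) t (f : V -> 'I_t) :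
  minor_fun e f -> t.*2 <= #|V| + omega e.
Proof.
case/andP => /forallP Hc /forallP Ht.
pose B i := [set x | f x == i].
have Bne : forall i, 0 < #|B i|.
  by move=> i; have /andP[ne _] := Hc i; rewrite card_gt0.
have uniqB : forall i u v, #|B i| == 1 -> f u = i -> f v = i -> u = v.
  move=> i u v /cards1P[z Ez] fu fv.
  have : u \in B i by rewrite inE fu.
  have : v \in B i by rewrite inE fv.
  by rewrite Ez !inE => /eqP-> /eqP->.
pose S := [set x | #|B (f x)| == 1].
have cl : is_clique e S.
  apply/forallP => x; apply/implyP; rewrite inE => Sx.
  apply/forallP => y; apply/implyP; rewrite inE => Sy; apply/implyP => xy.
  have fxy : f x != f y.
    apply/eqP => E; move: xy; rewrite (uniqB (f x) x y Sx erefl (esym E)).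
    by rewrite eqxx.
  have /existsP[x' /existsP[y' /and3P[/eqP fx' /eqP fy' exy]]] :=
    implyP (forallP (Ht (f x)) (f y)) fxy.
  by rewrite -(uniqB _ _ _ Sx fx' erefl) -(uniqB _ _ _ Sy fy' erefl).
have Sle : #|S| <= omega e.
  rewrite /omega; apply: leq_bigmax_cond; exact: cl.
have cardV : #|V| = \sum_(i < t) #|B i|.
  rewrite -sum1_card (partition_big f predT) //=.
  by apply: eq_bigr => i _; rewrite -sum1_card; apply: eq_bigl => x; rewrite inE.
have cardS : #|S| = \sum_(i < t) (#|B i| == 1).
  rewrite -sum1_card (partition_big f predT) //=.
  apply: eq_bigr => i _.
  case: (boolP (#|B i| == 1)) => Hi.
    transitivity #|B i|; last by rewrite (eqP Hi).
    rewrite -sum1_card; apply: eq_bigl => x.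
    by rewrite !inE; case: (eqVneq (f x) i) => [->|]; rewrite ?Hi ?andbF.
  apply: big_pred0 => x; rewrite !inE; case: (eqVneq (f x) i) => [->|];
    by rewrite ?(negbTE Hi) ?andbF.
have : t.*2 <= #|V| + #|S|.
  rewrite cardV cardS -big_split /= -[t in t.*2]card_ord -sum1_card -muln2 big_distrl /=.
  apply: leq_sum => i _; have := Bne i; lia.
lia.
Qed.

Lemma omega_path k : omega (compl_rel (path_rel k)) <= k.+1./2.
Proof.
rewrite /omega; apply/bigmax_leqP => S cl.
have gP : forall x : 'I_k, x./2 < k.+1./2 by move=> x; have := ltn_ord x; lia.
pose g (x : 'I_k) : 'I_(k.+1./2) := Ordinal (gP x).
rewrite -(card_in_imset (f := g)); first by apply: leq_trans (max_card _) _; rewrite card_ord.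
move=> x y xS yS /(congr1 val) /= E.
apply/eqP/negPn/negP => xy.
have := implyP (forallP (implyP (forallP cl x) xS) y) yS.
have xy2 : (x : nat) != y by []. rewrite xy /= /compl_rel xy /= /path_rel; lia.
Qed.

Lemma omega_cycle k : 3 <= k -> omega (compl_rel (cycle_rel k)) <= k./2.
Proof.
move=> k3; rewrite /omega; apply/bigmax_leqP => S cl.
have adj : forall i : 'I_k, (i \in S) && (ordS i \in S) = false.
  move=> i; apply/negbTE/negP => /andP[iS jS].
  have := implyP (forallP (implyP (forallP cl i) iS) (ordS i)) jS.
  rewrite /compl_rel /cycle_rel /path_rel -val_eqE /=.
  have := ltn_ord i; case: (ltngtP i.+1 k) => // H _.
    by rewrite modn_small //; lia.
  by rewrite H modnn; lia.
have cS : #|S| = \sum_(i < k) (i \in S).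
  by rewrite -sum1_card big_mkcond.
have : #|S| + #|S| <= k.
  have e2 : \sum_(i < k) (i \in S) = \sum_(i < k) (ordS i \in S) := reindex_inj (@ordS_inj k).
  rewrite {1}cS {1}cS {2}e2 -big_split /=.
  rewrite -[k in _ <= k]card_ord -sum1_card.
  by apply: leq_sum => i _; have := adj i; case: (i \in S); case: (ordS i \in S).
lia.
Qed.

Definition R (s m : nat) := m.+1 + minn m s.-1.
Definition A (s i : nat) := if i < s then 2 * i else R s (i - s).
Definition Bf (s p i : nat) := if i < s then 2 * i else R s (i - s + p).
Definition cyc k x y := (x.+1 == y) || (y.+1 == x) || ((x == 0) && (y == k.-1)) || ((y == 0) && (x == k.-1)).
Definition pth (x y : nat) := (x.+1 == y) || (y.+1 == x).

Lemma H2c s p : forall i j, i < s + p -> j < s + p -> i <> j ->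
  [/\ A s i <> A s j, A s i <> Bf s p j, Bf s p i <> A s j & Bf s p i <> Bf s p j].
Proof. move=> i j Hi Hj ij; rewrite /A /Bf /R; case: ifP; case: ifP => *; split; lia. Qed.

Lemma H1c k s p : k = s + 2 * p -> 0 < s -> s.-1 <= 2 * p ->
  forall i, i < s + p -> A s i < k /\ Bf s p i < k.
Proof. move=> *; rewrite /A /Bf /R; case: ifP => *; lia. Qed.

Lemma H3c k s p : k = s + 2 * p -> 0 < s -> s.-1 <= 2 * p ->
  forall x, x < k -> exists2 i, i < s + p & (A s i = x \/ Bf s p i = x).
Proof.
move=> Hk s0 sp x xk.
case: (boolP (~~ odd x && (x < 2 * s))) => H.
  exists x./2; first lia. left; rewrite /A; case: ifP => *; lia.
pose m := if odd x && (x < 2 * s) then x./2 else x - s.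
have Rm : R s m = x by rewrite /R /m; case: ifP => *; lia.
have mk : m < 2 * p by rewrite /m; case: ifP => *; lia.
case: (ltnP m p) => mp.
  exists (s + m); first lia. by left; rewrite /A ifF ?addKn //; lia.
exists (s + m - p); first lia. right; rewrite /Bf ifF; last lia.
by rewrite -Rm; congr R; lia.
Qed.

Lemma H4c k s p : k = s + 2 * p -> 0 < s -> s.-1 <= 2 * p -> 2 <= p ->
  forall i, i < s + p -> A s i <> Bf s p i ->
  ~~ cyc k (A s i) (Bf s p i) && ~~ cyc k (Bf s p i) (A s i).
Proof. move=> *; rewrite /A /Bf /R /cyc; case: ifP => *; lia. Qed.

Lemma H4p k s p : k = s + 2 * p -> 0 < s -> s.-1 <= 2 * p -> 2 <= p ->
  forall i, i < s + p -> A s i <> Bf s p i ->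
  ~~ pth (A s i) (Bf s p i) && ~~ pth (Bf s p i) (A s i).
Proof. move=> *; rewrite /A /Bf /R /pth; case: ifP => *; lia. Qed.

Lemma H5p k s p : k = s + 2 * p -> 0 < s -> s.-1 <= 2 * p -> 2 <= p ->
  forall i j, i < s + p -> j < s + p -> i <> j ->
  [|| ~~pth (A s i) (A s j), ~~pth (A s i) (Bf s p j), ~~pth (Bf s p i) (A s j)
     | ~~pth (Bf s p i) (Bf s p j)].
Proof. move=> ? ? ? ? i j *; rewrite /A /Bf /R /pth; case: ifP; case: ifP => *; lia. Qed.

Lemma no4 k u w v1 v2 : 5 <= k -> u < k -> w < k -> v1 < k -> v2 < k -> u <> w -> v1 <> v2 ->
  cyc k u v1 -> cyc k u v2 -> cyc k w v1 -> cyc k w v2 -> False.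
Proof.
move=> k5 uk wk v1k v2k uw v12.
rewrite /cyc => /orP[/orP[/orP[]|]|] h1; lia.
Qed.

Lemma H5c k s p : k = s + 2 * p -> 0 < s -> s.-1 <= 2 * p -> 2 * s <= k -> 2 <= p ->
  forall i j, i < s + p -> j < s + p -> i <> j ->
  [|| ~~cyc k (A s i) (A s j), ~~cyc k (A s i) (Bf s p j), ~~cyc k (Bf s p i) (A s j)
     | ~~cyc k (Bf s p i) (Bf s p j)].
Proof.
move=> Hk s0 sp s2 p2 i j Hi Hj ij.
case: (ltnP i s) => Is; case: (ltnP j s) => Js.
- apply/orP; left; rewrite /A Is Js /cyc; lia.
- suff: ~~ (cyc k (A s i) (A s j) && cyc k (A s i) (Bf s p j)).
    by rewrite negb_and => /orP[] ->; rewrite ?orbT.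
  rewrite /A /Bf Is; have -> : (j < s) = false by lia.
  rewrite /R /cyc; lia.
- suff: ~~ (cyc k (A s i) (A s j) && cyc k (Bf s p i) (A s j)).
    by rewrite negb_and => /orP[] ->; rewrite ?orbT.
  rewrite /A /Bf Js; have -> : (i < s) = false by lia.
  rewrite /R /cyc; lia.
- have [a1 b1] := @H1c k s p Hk s0 sp i Hi.
  have [a2 b2] := @H1c k s p Hk s0 sp j Hj.
  have ab : A s i <> Bf s p i.
    rewrite /A /Bf; have -> : (i < s) = false by lia.
    rewrite /R; lia.
  have ab2 : A s j <> Bf s p j.
    rewrite /A /Bf; have -> : (j < s) = false by lia.
    rewrite /R; lia.
  have N := @no4 k (A s i) (Bf s p i) (A s j) (Bf s p j) ltac:(lia) a1 b1 a2 b2 ab ab2.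
  move: N; case: (cyc k (A s i) (A s j)); case: (cyc k (A s i) (Bf s p j));
    case: (cyc k (Bf s p i) (A s j)); case: (cyc k (Bf s p i) (Bf s p j)) => //= N;
    exfalso; exact: N.
Qed.

Lemma eta_ge (V : finType) (e : rel V) T : T <= #|V| -> has_Kt_minor_fun e T -> T <= eta e.
Proof.
move=> TV H; rewrite /eta.
have TV' : T < #|V|.+1 by [].
exact: (@leq_bigmax_cond _ _ (fun t : 'I_#|V|.+1 => nat_of_ord t) (Ordinal TV') H).
Qed.

Lemma eta_le (V : finType) (e : rel V) : eta e <= (#|V| + omega e)./2.
Proof.
rewrite /eta; apply/bigmax_leqP => t /existsP[f Hf].
have := @minor_bound V e t f Hf; lia.
Qed.

Lemma Lc k s p : k = s + 2 * p -> 0 < s -> s.-1 <= 2 * p -> 2 * s <= k -> 2 <= p ->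
  s + p <= eta (compl_rel (cycle_rel k)).
Proof.
move=> Hk s0 sp s2 p2.
apply: eta_ge; first by rewrite card_ord; lia.
have -> : cycle_rel k = (fun x y : 'I_k => cyc k x y) by [].
apply: (@construct k (s + p) _ (A s) (Bf s p)).
- lia.
- exact: H1c.
- exact: H2c.
- exact: H3c.
- exact: H4c.
- exact: H5c.
Qed.

Lemma Lp k s p : k = s + 2 * p -> 0 < s -> s.-1 <= 2 * p -> 2 <= p ->
  s + p <= eta (compl_rel (path_rel k)).
Proof.
move=> Hk s0 sp p2.
apply: eta_ge; first by rewrite card_ord; lia.
have -> : path_rel k = (fun x y : 'I_k => pth x y) by [].
apply: (@construct k (s + p) _ (A s) (Bf s p)).
- lia.
- exact: H1c.
- exact: H2c.
- exact: H3c.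
- exact: H4p.
- exact: H5p.
Qed.

Theorem lemma9 (k : nat) : 6 <= k ->
  [/\ eta (compl_rel (cycle_rel k)) = (k + omega (compl_rel (cycle_rel k)))./2,
      eta (compl_rel (path_rel k)) = (k + omega (compl_rel (path_rel k)))./2,
      eta (compl_rel (cycle_rel k)) = 3 * (k %/ 4) + nth 0 [:: 0; 0; 1; 2] (k %% 4)
    & eta (compl_rel (path_rel k)) = 3 * (k %/ 4) + nth 0 [:: 0; 1; 1; 2] (k %% 4)].
Proof.
move=> k6.
have ec := @eta_le _ (compl_rel (cycle_rel k)); rewrite card_ord in ec.
have ep := @eta_le _ (compl_rel (path_rel k)); rewrite card_ord in ep.
have oc := @omega_cycle k ltac:(lia).
have op := omega_path k.
have Lc' := @Lc k. have Lp' := @Lp k.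
move: ec ep oc op Lc' Lp'.
set Ec := eta _. set Ep := eta _. set Oc := omega _. set Op := omega _.
move=> ec ep oc op Lc' Lp'.
have Hk := divn_eq k 4.
set t := k %/ 4 in Hk *.
case Er: (k %% 4) Hk => [|[|[|[|r]]]] Hk /=.
- have := Lc' (2 * t) t ltac:(lia) ltac:(lia) ltac:(lia) ltac:(lia) ltac:(lia).
  have := Lp' (2 * t) t ltac:(lia) ltac:(lia) ltac:(lia) ltac:(lia).
  move=> *; split; lia.
- have := Lc' (2 * t - 1) (t + 1) ltac:(lia) ltac:(lia) ltac:(lia) ltac:(lia) ltac:(lia).
  have := Lp' (2 * t + 1) t ltac:(lia) ltac:(lia) ltac:(lia) ltac:(lia).
  move=> *; split; lia.
- have := Lc' (2 * t) (t + 1) ltac:(lia) ltac:(lia) ltac:(lia) ltac:(lia) ltac:(lia).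
  have := Lp' (2 * t) (t + 1) ltac:(lia) ltac:(lia) ltac:(lia) ltac:(lia).
  move=> *; split; lia.
- have := Lc' (2 * t + 1) (t + 1) ltac:(lia) ltac:(lia) ltac:(lia) ltac:(lia) ltac:(lia).
  have := Lp' (2 * t + 1) (t + 1) ltac:(lia) ltac:(lia) ltac:(lia) ltac:(lia).
  move=> *; split; lia.
- have := ltn_pmod k (isT : 0 < 4); rewrite Er; lia.
Qed.
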